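(* Let $\varphi:\Lambda\to\Gamma$ be a regular covering map of finite simplicial graphs without isolated vertices. Then the sequences $$1\to\mathrm{FD}(\varphi)\to\mathrm{FAut}(\varphi)\to\mathrm{LAut}(\varphi)\to1$$ and $$1\to\mathrm{Deck}(\varphi)\to\mathrm{FAut}(\varphi)/(\mathrm{FAut}(\varphi)\cap\mathrm{IA}(A_\Lambda))\to\mathrm{LAut}(\varphi)/(\mathrm{LAut}(\varphi)\cap\mathrm{IA}(A_\Gamma))\to1$$ are exact, where the map $\mathrm{FAut}(\varphi)\to\mathrm{LAut}(\varphi)$ sends a lift $F$ to the automorphism $f$ it lifts, the second sequence has the maps induced by inclusion of $\mathrm{Deck}(\varphi)$ and by $F\mapsto f$.
   Context: Graphs are finite simplicial graphs; $A_\Gamma$ is the right-angled Artin group with generators $V\Gamma$ and relations $[u,v]=1$ for edges $\{u,v\}$. A covering map of graphs $\varphi:\Lambda\to\Gamma$ is a surjective simplicial map that maps the neighbours of each vertex $u$ bijectively onto the neighbours of $\varphi(u)$; $\mathrm{Deck}(\varphi)$ is the group of graph automorphisms $\mu$ of $\Lambda$ with $\varphi\mu=\varphi$, regarded as a subgroup of $\mathrm{Aut}(A_\Lambda)$; $\varphi$ is regular if $\mathrm{Deck}(\varphi)$ acts transitively on each fiber. Let $\phi:A_\Lambda\to A_\Gamma$ be induced by $\varphi$. $f\in\mathrm{Aut}(A_\Gamma)$ is liftable if there is $F\in\mathrm{Aut}(A_\Lambda)$ (a lift) with $f\circ\phi=\phi\circ F$ (since $\phi$ is surjective, $F$ determines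 $f$). $\mathrm{LAut}(\varphi)$ is the group of liftable automorphisms, $\mathrm{FAut}(\varphi)\le\mathrm{Aut}(A_\Lambda)$ the group of all lifts of liftable automorphisms, and $\mathrm{FD}(\varphi)$ the group of lifts of the identity. $\mathrm{IA}(A)$ denotes the kernel of the action of $\mathrm{Aut}(A)$ on $H_1(A)$. *)

(* Defs.v *)
(* Right-angled Artin groups presented by words modulo the
   congruence generated by the defining relations. *)
From mathcomp Require Import all_boot all_order all_algebra.
Set Implicit Arguments. Unset Strict Implicit. Unset Printing Implicit Defensive.
Import GRing.Theory.

Definition simple_graph (T : finType) (e : rel T) : Prop :=
  symmetric e /\ irreflexive e.

Definition no_isolated (T : finType) (e : rel T) : Prop :=
  forall v, exists u, e v u.

(* Words in the generators: (a,false) = a, (a,true) = a^-1. *)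
Definition word (T : Type) := seq (T * bool).

Definition gen (T : Type) (a : T) : word T := [:: (a, false)].

Definition winv (T : Type) (w : word T) : word T :=
  rev (map (fun p => (p.1, ~~ p.2)) w).

Inductive raag_eq (T : Type) (e : rel T) : word T -> word T -> Prop :=
| req_refl w : raag_eq e w w
| req_sym w1 w2 : raag_eq e w1 w2 -> raag_eq e w2 w1
| req_trans w1 w2 w3 : raag_eq e w1 w2 -> raag_eq e w2 w3 -> raag_eq e w1 w3
| req_cancel u v a b :
    raag_eq e (u ++ (a, b) :: (a, ~~ b) :: v) (u ++ v)
| req_comm u v a b c d : e a c ->
    raag_eq e (u ++ (a, b) :: (c, d) :: v) (u ++ (c, d) :: (a, b) :: v).

(* An endomorphism-candidate is given by the images of the generators. *)
Definition subst (T T' : Type) (f : T -> word T') (w : word T) : word T' :=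
  flatten (map (fun p => if p.2 then winv (f p.1) else f p.1) w).

(* The map on generators extends to a homomorphism A_T -> A_T'. *)
Definition is_hom (T T' : Type) (e : rel T) (e' : rel T') (f : T -> word T') : Prop :=
  forall a b, e a b -> raag_eq e' (f a ++ f b) (f b ++ f a).

Definition is_aut (T : Type) (e : rel T) (f : T -> word T) : Prop :=
  is_hom e e f /\
  exists g, is_hom e e g /\
    forall a, raag_eq e (subst f (g a)) (gen a) /\ raag_eq e (subst g (f a)) (gen a).

Definition aut_eq (T : Type) (e : rel T) (f g : T -> word T) : Prop :=
  forall a, raag_eq e (f a) (g a).

Definition autcomp (T : Type) (f g : T -> word T) : T -> word T :=
  fun a => subst f (g a).

Definition mapw (W V : Type) (phi : W -> V) (w : word W) : word V :=
  map (fun p => (phi p.1, p.2)) w.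

(* F lifts f : f o phi = phi o F (checked on generators, both sides being
   homomorphisms). *)
Definition lifts (W V : Type) (eG : rel V) (phi : W -> V)
    (F : W -> word W) (f : V -> word V) : Prop :=
  forall w, raag_eq eG (f (phi w)) (mapw phi (F w)).

Definition liftable (W V : Type) (eL : rel W) (eG : rel V) (phi : W -> V)
    (f : V -> word V) : Prop :=
  is_aut eG f /\ exists F, is_aut eL F /\ lifts eG phi F f.

Definition in_FAut (W V : Type) (eL : rel W) (eG : rel V) (phi : W -> V)
    (F : W -> word W) : Prop :=
  is_aut eL F /\ exists f, is_aut eG f /\ lifts eG phi F f.

Definition in_FD (W V : Type) (eL : rel W) (eG : rel V) (phi : W -> V)
    (F : W -> word W) : Prop :=
  is_aut eL F /\ lifts eG phi F (@gen V).

(* Action on H_1(A_T) = Z^T: exponent sum of generator b in a word. *)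
Definition expsum (T : eqType) (w : word T) (b : T) : int :=
  ((count (pred1 (b, false)) w)%:Z - (count (pred1 (b, true)) w)%:Z)%R.

Definition in_IA (T : eqType) (f : T -> word T) : Prop :=
  forall a b, expsum (f a) b = ((a == b : nat)%:Z)%R.

(* f and g induce the same action on H_1 (i.e. same coset modulo IA). *)
Definition same_H1 (T : eqType) (f g : T -> word T) : Prop :=
  forall a b, expsum (f a) b = expsum (g a) b.

Definition covering (W V : finType) (eL : rel W) (eG : rel V) (phi : W -> V) : Prop :=
  (forall v, exists w, phi w = v) /\
  (forall a b, eL a b -> eG (phi a) (phi b)) /\
  (forall u a b, eL u a -> eL u b -> phi a = phi b -> a = b) /\
  (forall u v, eG (phi u) v -> exists a, eL u a /\ phi a = v).

Definition deck (W V : finType) (eL : rel W) (phi : W -> V) (mu : W -> W) : Prop :=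
  bijective mu /\ (forall a b, eL (mu a) (mu b) = eL a b) /\
  (forall a, phi (mu a) = phi a).

Definition deck_aut (W : Type) (mu : W -> W) : W -> word W := fun w => gen (mu w).

Definition regular (W V : finType) (eL : rel W) (phi : W -> V) : Prop :=
  forall a b, phi a = phi b -> exists mu, deck eL phi mu /\ mu a = b.

(* Main.v *)
Require Import Defs.
From mathcomp Require Import all_boot all_order all_algebra.
From mathcomp Require Import zify ring lra.

Module Helpers.
Set Implicit Arguments. Unset Strict Implicit. Unset Printing Implicit Defensive.
Import GRing.Theory Num.Theory.

Section Words.
Variables (T : Type) (e : rel T).
Local Notation req := (raag_eq e).

Lemma req_catl u x y : req x y -> req (u ++ x) (u ++ y).
Proof.
elim=> [w|w1 w2 _ IH|w1 w2 w3 _ IH1 _ IH2|u' v a b|u' v a b c d hac].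
- exact: req_refl.
- exact: req_sym.
- exact: req_trans IH2.
- rewrite !catA; exact: req_cancel.
- rewrite !catA; exact: req_comm.
Qed.

Lemma req_catr v x y : req x y -> req (x ++ v) (y ++ v).
Proof.
elim=> [w|w1 w2 _ IH|w1 w2 w3 _ IH1 _ IH2|u' v' a b|u' v' a b c d hac].
- exact: req_refl.
- exact: req_sym.
- exact: req_trans IH2.
- rewrite -!catA /=; exact: req_cancel.
- rewrite -!catA /=; exact: req_comm.
Qed.

Lemma req_cat x x' y y' : req x x' -> req y y' -> req (x ++ y) (x' ++ y').
Proof. move=> h1 h2; apply: req_trans (req_catr _ h1) (req_catl _ h2). Qed.

Lemma winv_cat (x y : word T) : winv (x ++ y) = winv y ++ winv x.
Proof. by rewrite /winv map_cat rev_cat. Qed.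

Lemma winv_cons (p : T * bool) (x : word T) : winv (p :: x) = winv x ++ [:: (p.1, ~~ p.2)].
Proof. by rewrite /winv /= rev_cons cats1. Qed.

Lemma winvK (x : word T) : winv (winv x) = x.
Proof. rewrite /winv map_rev revK -map_comp; elim: x => [|[a b] x IH] //=; by rewrite negbK IH. Qed.

Lemma req_winv x y : req x y -> req (winv x) (winv y).
Proof.
elim=> [w|w1 w2 _ IH|w1 w2 w3 _ IH1 _ IH2|u' v a b|u' v a b c d hac].
- exact: req_refl.
- exact: req_sym.
- exact: req_trans IH2.
- rewrite !winv_cat /winv /= !rev_cons -!cats1 -!catA /=.
  have := @req_cancel _ e (rev (map (fun p => (p.1, ~~ p.2)) v)) (rev (map (fun p => (p.1, ~~ p.2)) u')) a (~~ ~~ b).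
  by rewrite negbK.
- rewrite !winv_cat /winv /= !rev_cons -!cats1 -!catA /=.
  apply: req_sym; exact: req_comm.
Qed.

Lemma req_inv_r x : req (x ++ winv x) [::].
Proof.
elim: x => [|p x IH] /=; first exact: req_refl.
rewrite winv_cons catA -cat_cons.
apply: req_trans (req_catr _ (req_catl [:: p] IH)) _ => /=.
case: p => a b /=.
exact: (@req_cancel _ e [::] [::] a b).
Qed.

Lemma req_inv_l x : req (winv x ++ x) [::].
Proof. by have := req_inv_r (winv x); rewrite winvK. Qed.

Definition commw x y := req (x ++ y) (y ++ x).

Lemma commw_sym x y : commw x y -> commw y x.
Proof. by move=> h; apply: req_sym. Qed.

Lemma commw_invl (x y : word T) : commw x y -> commw (winv x) y.
Proof.
move=> h; rewrite /commw.
have h1 : req (winv x ++ y ++ x ++ winv x) (winv x ++ y).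
  have := req_catl (winv x ++ y) (req_inv_r x); by rewrite cats0 -!catA.
have h2 : req (winv x ++ y ++ x ++ winv x) (winv x ++ x ++ y ++ winv x).
  have := req_catl (winv x) (req_catr (winv x) (req_sym h)); by rewrite -!catA.
have h3 : req (winv x ++ x ++ y ++ winv x) (y ++ winv x).
  have := req_catr (y ++ winv x) (req_inv_l x); by rewrite -!catA.
exact: req_trans (req_sym h1) (req_trans h2 h3).
Qed.

Lemma commw_invr x y : commw x y -> commw x (winv y).
Proof. by move=> h; apply: commw_sym; apply: commw_invl; apply: commw_sym. Qed.

End Words.

Section Subst.
Variables (T T' : Type) (e : rel T) (e' : rel T').

Definition img (f : T -> word T') (p : T * bool) : word T' :=
  if p.2 then winv (f p.1) else f p.1.

Lemma subst_cons (f : T -> word T') p (x : word T) : subst f (p :: x) = img f p ++ subst f x.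
Proof. by []. Qed.

Lemma subst_cat (f : T -> word T') (x y : word T) : subst f (x ++ y) = subst f x ++ subst f y.
Proof. by rewrite /subst map_cat flatten_cat. Qed.

Lemma subst_winv (f : T -> word T') (x : word T) : subst f (winv x) = winv (subst f x).
Proof.
elim: x => [|[a b] x IH] //=.
rewrite winv_cons subst_cat IH subst_cons winv_cat /= /subst /= cats0 /img /=.
by case: b => //=; rewrite winvK.
Qed.

Lemma subst_req (f : T -> word T') (x y : word T) : is_hom e e' f -> raag_eq e x y -> raag_eq e' (subst f x) (subst f y).
Proof.
move=> hf.
elim=> [w|w1 w2 _ IH|w1 w2 w3 _ IH1 _ IH2|u v a b|u v a b c d hac].
- exact: req_refl.
- exact: req_sym.
- exact: req_trans IH2.
- rewrite !subst_cat !subst_cons; apply: req_catl.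
  have H : raag_eq e' (img f (a, b) ++ img f (a, ~~ b)) [::].
    rewrite /img /=; case: b => /=; [exact: req_inv_l | exact: req_inv_r].
  have := req_catr (subst f v) H; by rewrite -catA.
- rewrite !subst_cat !subst_cons; apply: req_catl; rewrite !catA; apply: req_catr.
  have hc := hf _ _ hac.
  rewrite /img /=; case: b; case: d => /=.
  + exact: commw_invl (commw_invr hc).
  + exact: commw_invl hc.
  + exact: commw_invr hc.
  + exact: hc.
Qed.

Lemma subst_pt (f g : T -> word T') (x : word T) : (forall a, raag_eq e' (f a) (g a)) -> raag_eq e' (subst f x) (subst g x).
Proof.
move=> h; elim: x => [|[a b] x IH] /=; first exact: req_refl.
rewrite !subst_cons; apply: req_cat => //.
rewrite /img /=; case: b => //; exact: req_winv.
Qed.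

End Subst.

Section Mapw.
Variables (W V : Type) (phi : W -> V).

Lemma mapw_cat (x y : word W) : mapw phi (x ++ y) = mapw phi x ++ mapw phi y.
Proof. by rewrite /mapw map_cat. Qed.

Lemma mapw_winv (x : word W) : mapw phi (winv x) = winv (mapw phi x).
Proof. by rewrite /mapw /winv map_rev -!map_comp. Qed.

Lemma mapw_req (eL : rel W) (eG : rel V) x y :
  (forall a b, eL a b -> eG (phi a) (phi b)) ->
  raag_eq eL x y -> raag_eq eG (mapw phi x) (mapw phi y).
Proof.
move=> hp.
elim=> [w|w1 w2 _ IH|w1 w2 w3 _ IH1 _ IH2|u v a b|u v a b c d hac].
- exact: req_refl.
- exact: req_sym.
- exact: req_trans IH2.
- rewrite !mapw_cat /=; exact: req_cancel.
- rewrite !mapw_cat /=; apply: req_comm; exact: hp.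
Qed.

Lemma mapw_subst (F : W -> word W) z :
  mapw phi (subst F z) = subst (fun w => mapw phi (F w)) z.
Proof.
elim: z => [|[a b] z IH] //=.
rewrite !subst_cons mapw_cat IH /img /=; case: b => //; by rewrite mapw_winv.
Qed.

Lemma subst_mapw (f : V -> word V) (z : word W) :
  subst f (mapw phi z) = subst (fun w => f (phi w)) z.
Proof. elim: z => [|[a b] z IH] //=; by rewrite !subst_cons IH. Qed.

End Mapw.

Local Open Scope ring_scope.

Definition sg (b : bool) : int := if b then -1 else 1.

Section Exp.
Variables (T : eqType) (e : rel T).

Lemma expsum_nil (b : T) : expsum [::] b = 0.
Proof. by []. Qed.

Lemma expsum_cons (x : T) s (z : word T) b :
  expsum ((x, s) :: z) b = sg s * ((x == b : nat)%:Z) + expsum z b.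
Proof.
rewrite /expsum /= !xpair_eqE eq_sym.
case: s; case: (b == x) => /=; rewrite /sg; lia.
Qed.

Lemma expsum_cat (x y : word T) b : expsum (x ++ y) b = expsum x b + expsum y b.
Proof. rewrite /expsum !count_cat !PoszD; ring. Qed.

Lemma expsum_winv (x : word T) b : expsum (winv x) b = - expsum x b.
Proof.
elim: x => [|[a s] x IH] //=.
rewrite winv_cons expsum_cat IH /= expsum_cons expsum_cons expsum_nil /sg.
case: s => /=; ring.
Qed.

Lemma expsum_gen (a b : T) : expsum (gen a) b = (a == b : nat)%:Z.
Proof. by rewrite /gen expsum_cons expsum_nil /sg mul1r addr0. Qed.

Lemma expsum_req (x y : word T) b : raag_eq e x y -> expsum x b = expsum y b.
Proof.
elim=> [w|w1 w2 _ IH|w1 w2 w3 _ IH1 _ IH2|u v a s|u v a s c d hac] //.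
- by rewrite IH1.
- rewrite !expsum_cat !expsum_cons /sg; case: s => /=; ring.
- rewrite !expsum_cat !expsum_cons; ring.
Qed.

Fixpoint Qf (p q : T) (w : word T) : int :=
  match w with
  | [::] => 0
  | (x, s) :: w' => (if x == p then sg s * expsum w' q else 0) + Qf p q w'
  end.

Lemma Qf_cat p q (x y : word T) :
  Qf p q (x ++ y) = Qf p q x + Qf p q y + expsum x p * expsum y q.
Proof.
elim: x => [|[a s] x IH] /=; first by rewrite /expsum /=; ring.
rewrite IH expsum_cat !expsum_cons.
case: (a == p) => /=; ring.
Qed.

Lemma Qf_req p q (x y : word T) : p != q -> ~~ e p q -> ~~ e q p ->
  raag_eq e x y -> Qf p q x = Qf p q y.
Proof.
move=> hpq hepq heqp.
elim=> [w|w1 w2 _ IH|w1 w2 w3 _ IH1 _ IH2|u v a s|u v a s c d hac] //.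
- by rewrite IH1.
- rewrite !Qf_cat /= !expsum_cons.
  have H : (a == p) && (a == q) = false.
    by apply/negbTE/negP => /andP [/eqP -> /eqP hq]; move: hpq; rewrite hq eqxx.
  move: H; rewrite /sg; case: (a == p); case: (a == q); case: s => //= _; ring.
- rewrite !Qf_cat /= !expsum_cons.
  have H1 : ~~ ((a == p) && (c == q)).
    apply/negP => /andP [/eqP ha /eqP hc]; move: hepq; by rewrite -ha -hc hac.
  have H2 : ~~ ((c == p) && (a == q)).
    apply/negP => /andP [/eqP hc /eqP ha]; move: heqp; by rewrite -ha -hc hac.
  move: H1 H2; case: (a == p); case: (c == q); case: (c == p); case: (a == q) => //= _ _; ring.
Qed.

Lemma comm_minor p q (x y : word T) : p != q -> ~~ e p q -> ~~ e q p ->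
  raag_eq e (x ++ y) (y ++ x) -> expsum x p * expsum y q = expsum y p * expsum x q.
Proof.
move=> h1 h2 h3 /(Qf_req h1 h2 h3); rewrite !Qf_cat => H.
apply/eqP; rewrite -subr_eq0; apply/eqP.
have -> : expsum x p * expsum y q - expsum y p * expsum x q =
  (Qf p q x + Qf p q y + expsum x p * expsum y q) - (Qf p q y + Qf p q x + expsum y p * expsum x q) by ring.
by rewrite H subrr.
Qed.

End Exp.

Section Sums.
Variables (W V : finType).

Lemma sum_delta (a : W) (g : W -> int) : \sum_(r : W) ((a == r : nat)%:Z * g r) = g a.
Proof.
rewrite (bigD1 a) //= eqxx mul1r big1 ?addr0 // => r hr.
by rewrite eq_sym (negbTE hr) mul0r.
Qed.

Lemma expsum_subst (f : W -> word V) (z : word W) q :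
  expsum (subst f z) q = \sum_(r : W) expsum z r * expsum (f r) q.
Proof.
elim: z => [|[a s] z IH] /=.
  by rewrite /subst /= big1 // => r _; rewrite mul0r.
rewrite subst_cons expsum_cat IH.
under eq_bigr => r _ do rewrite expsum_cons mulrDl.
rewrite big_split /=.
under [X in _ = X + _]eq_bigr => r _ do rewrite -mulrA.
rewrite -mulr_sumr sum_delta /img /=; case: s => /=; rewrite /sg ?expsum_winv; ring.
Qed.

Lemma expsum_mapw (phi : W -> V) (z : word W) g :
  expsum (mapw phi z) g = \sum_(r | phi r == g) expsum z r.
Proof.
elim: z => [|[a s] z IH] /=.
  by rewrite big1.
rewrite expsum_cons IH /=.
under [in RHS]eq_bigr => r _ do rewrite expsum_cons.
rewrite [RHS]big_split.
suff -> : sg s * ((phi a == g : nat)%:Z) = \sum_(r | phi r == g) sg s * ((a == r : nat)%:Z) by [].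
rewrite big_mkcond /=.
rewrite (bigD1 a) //= eqxx big1 ?addr0; first by case: (phi a == g) => /=; rewrite ?mulr0.
by move=> r hr; rewrite [a == r]eq_sym (negbTE hr); case: (phi r == g); rewrite /= ?mulr0.
Qed.

End Sums.

Local Open Scope ring_scope.

Section Column.
Variables (W V : finType) (eL : rel W) (eG : rel V) (phi : W -> V).
Hypotheses (symL : symmetric eL) (irrG : irreflexive eG)
  (hpres : forall a b, eL a b -> eG (phi a) (phi b))
  (hloc : forall u p p', eL u p -> eL u p' -> phi p = phi p' -> p = p').

Lemma column (x y : W -> int) (a b : W) :
  phi a != phi b ->
  (forall g, \sum_(q | phi q == g) x q = (phi a == g : nat)%:Z) ->
  (forall g, \sum_(q | phi q == g) y q = (phi b == g : nat)%:Z) ->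
  (forall p q, p != q -> ~~ eL p q -> x p * y q = y p * x q) ->
  exists a', phi a' = phi a /\ forall q, x q = (a' == q : nat)%:Z.
Proof.
move=> hab hx hy hmin.
pose nz p := (x p != 0) || (y p != 0).
have step0 : forall p, nz p -> exists r, x p * y r != y p * x r.
  move=> p hp.
  case: (boolP [exists r, x p * y r != y p * x r]) => [/existsP //|/existsPn H].
  have H' : forall r, x p * y r = y p * x r by move=> r; apply/eqP; rewrite -[_ == _]negbK; exact: H.
  have s1 : \sum_(r | phi r == phi a) x p * y r = \sum_(r | phi r == phi a) y p * x r.
    by apply: eq_bigr => r _; exact: H'.
  have s2 : \sum_(r | phi r == phi b) x p * y r = \sum_(r | phi r == phi b) y p * x r.
    by apply: eq_bigr => r _; exact: H'.
  have hba : (phi b == phi a) = false by rewrite eq_sym (negbTE hab).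
  rewrite -!mulr_sumr hx hy eqxx hba /= mulr0 mulr1 in s1.
  rewrite -!mulr_sumr hx hy eqxx (negbTE hab) /= mulr0 mulr1 in s2.
  by move: hp; rewrite /nz -s1 s2 eqxx.
have step1 : forall p p', phi p = phi p' -> nz p -> nz p' -> p = p'.
  move=> p p' hph hp hp'.
  apply/eqP; apply/negPn/negP => hne.
  have hnadj : ~~ eL p p'.
    apply/negP => /hpres; by rewrite hph irrG.
  have h1 := hmin _ _ hne hnadj.
  have [r hr] := step0 _ hp.
  set D := x p * y r - y p * x r.
  have hD : D != 0 by rewrite /D subr_eq0.
  have hr' : x p' * y r != y p' * x r.
    apply/negP => /eqP h2.
    have e1 : D * x p' = 0.
      have -> : D * x p' = x p * (x p' * y r) - x r * (y p * x p') by rewrite /D; ring.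
      rewrite h2 -h1; ring.
    have e2 : D * y p' = 0.
      have -> : D * y p' = y r * (x p * y p') - y p * (y p' * x r) by rewrite /D; ring.
      rewrite h1 -h2; ring.
    move/eqP: e1; rewrite mulf_eq0 (negbTE hD) /= => /eqP e1.
    move/eqP: e2; rewrite mulf_eq0 (negbTE hD) /= => /eqP e2.
    by move: hp'; rewrite /nz e1 e2 eqxx.
  have hrp : r != p by apply/negP => /eqP e0; move: hr; rewrite e0 mulrC eqxx.
  have hrp' : r != p' by apply/negP => /eqP e0; move: hr'; rewrite e0 mulrC eqxx.
  have ha1 : eL r p.
    apply/negPn/negP => hn; have := hmin _ _ hrp hn => h3.
    by move: hr; rewrite [x p * _]mulrC [y p * _]mulrC h3 eqxx.
  have ha2 : eL r p'.
    apply/negPn/negP => hn; have := hmin _ _ hrp' hn => h3.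
    by move: hr'; rewrite [x p' * _]mulrC [y p' * _]mulrC h3 eqxx.
  by move: hne; rewrite (hloc ha1 ha2 hph) eqxx.
have step2 : forall q, x q != 0 -> \sum_(q' | phi q' == phi q) x q' = x q.
  move=> q hq; rewrite (bigD1 q) //= big1 ?addr0 // => q' /andP [/eqP hq' hne].
  apply/eqP; apply/negPn/negP => hnz.
  have := step1 _ _ hq'; rewrite /nz hnz hq /= => /(_ isT isT) heq.
  by move: hne; rewrite heq eqxx.
have [a' [ha' hxa']] : exists a', phi a' = phi a /\ x a' != 0.
  case: (boolP [exists a', (phi a' == phi a) && (x a' != 0)]).
    by move=> /existsP [a' /andP [/eqP h1 h2]]; exists a'.
  move=> /existsPn H.
  have := hx (phi a); rewrite eqxx big1 //.
  move=> q /eqP hq; move: (H q); rewrite hq eqxx /= => /negPn /eqP //.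
exists a'; split => // q.
have [<-|hne] := eqVneq a' q.
  by rewrite -step2 // hx ha' eqxx.
apply/eqP; apply/negPn/negP => hnz.
have := step2 _ hnz; rewrite hx => hq.
have hph : phi a = phi q.
  by apply/eqP; apply/negPn/negP => hn; move: hnz; rewrite -hq (negbTE hn) eqxx.
have := step1 a' q; rewrite /nz hxa' hnz /= ha' hph => /(_ erefl isT isT) heq.
by move: hne; rewrite heq eqxx.
Qed.

End Column.

Local Open Scope ring_scope.

Lemma gen_aut (T : Type) (e : rel T) : is_aut e (@gen T).
Proof.
have hh : is_hom e e (@gen T).
  move=> a b h; exact: (@req_comm _ e [::] [::] a false b false h).
split => //; exists (@gen T); split => // a; split; rewrite /subst /=; exact: req_refl.
Qed.

Lemma deck_is_aut (W V : finType) (eL : rel W) (phi : W -> V) mu :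
  deck eL phi mu -> is_aut eL (deck_aut mu).
Proof.
move=> [[g hmg hgm] [hedge hphi]].
split.
  move=> a b hab; rewrite /deck_aut; apply: (@req_comm _ eL [::] [::]); by rewrite hedge.
exists (deck_aut g); split.
  move=> a b hab; rewrite /deck_aut; apply: (@req_comm _ eL [::] [::]); by rewrite -hedge !hgm.
move=> a; rewrite /deck_aut /subst /= hgm hmg; split; exact: req_refl.
Qed.

Lemma deck_lifts (W V : finType) (eL : rel W) (eG : rel V) (phi : W -> V) mu :
  deck eL phi mu -> lifts eG phi (deck_aut mu) (@gen V).
Proof. move=> [_ [_ hphi]] w; rewrite /mapw /deck_aut /gen /= hphi; exact: req_refl. Qed.

Lemma edge_lemma (W : finType) (eL : rel W) (H : W -> word W) a b a' b' :
  symmetric eL -> is_hom eL eL H -> eL a b ->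
  (forall q, expsum (H a) q = (a' == q : nat)%:Z) ->
  (forall q, expsum (H b) q = (b' == q : nat)%:Z) -> a' != b' -> eL a' b'.
Proof.
move=> sym hH hab ha hb hne.
apply/negPn/negP => hn.
have hn' : ~~ eL b' a' by rewrite sym.
have := comm_minor hne hn hn' (hH a b hab).
by rewrite !ha !hb !eqxx [b' == a']eq_sym (negbTE hne).
Qed.

End Helpers.
Import Helpers.
Unset Implicit Arguments.
Import GRing.Theory Num.Theory.

Theorem corollary7p4 (V W : finType) (eG : rel V) (eL : rel W) (phi : W -> V)
  (hG : simple_graph eG) (hL : simple_graph eL)
  (hGi : no_isolated eG) (hLi : no_isolated eL)
  (hcov : covering eL eG phi) (hreg : regular eL phi) :
  (forall F f1 f2, is_aut eL F -> is_aut eG f1 -> is_aut eG f2 ->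
     lifts eG phi F f1 -> lifts eG phi F f2 -> aut_eq eG f1 f2) /\
  (forall F1 F2 f1 f2, is_aut eL F1 -> is_aut eL F2 -> is_aut eG f1 -> is_aut eG f2 ->
     lifts eG phi F1 f1 -> lifts eG phi F2 f2 ->
     lifts eG phi (autcomp F1 F2) (autcomp f1 f2)) /\
  (forall F, in_FD eL eG phi F -> in_FAut eL eG phi F) /\
  (forall F f, in_FAut eL eG phi F -> is_aut eG f -> lifts eG phi F f ->
     (aut_eq eG f (@gen V) <-> in_FD eL eG phi F)) /\
  (forall f, liftable eL eG phi f -> exists F, in_FAut eL eG phi F /\ lifts eG phi F f) /\
  (forall mu, deck eL phi mu ->
     in_FAut eL eG phi (deck_aut mu) /\ lifts eG phi (deck_aut mu) (@gen V)) /\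
  (forall mu1 mu2, deck eL phi mu1 -> deck eL phi mu2 ->
     same_H1 (deck_aut mu1) (deck_aut mu2) -> mu1 =1 mu2) /\
  (forall F1 F2 f1 f2, in_FAut eL eG phi F1 -> in_FAut eL eG phi F2 ->
     is_aut eG f1 -> is_aut eG f2 -> lifts eG phi F1 f1 -> lifts eG phi F2 f2 ->
     same_H1 F1 F2 -> same_H1 f1 f2) /\
  (forall F f, in_FAut eL eG phi F -> is_aut eG f -> lifts eG phi F f -> in_IA f ->
     exists mu, deck eL phi mu /\ same_H1 F (deck_aut mu)).
Proof.
have [symG irrG] := hG; have [symL irrL] := hL.
have [hsurj [hpres [hloc hlift]]] := hcov.
split.
  move=> F f1 f2 _ _ _ h1 h2 v; have [w <-] := hsurj v.
  exact: req_trans (h1 w) (req_sym (h2 w)).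
split.
  move=> F1 F2 f1 f2 _ _ [hf1 _] _ l1 l2 w; rewrite /autcomp.
  apply: req_trans (subst_req hf1 (l2 w)) _.
  rewrite subst_mapw mapw_subst; exact: subst_pt.
split.
  move=> F [hF hl]; split; first exact: hF.
  exists (@gen V); split; [exact: gen_aut | exact: hl].
split.
  move=> F f [hF _] hf hl; split.
    move=> he; split => // w; exact: req_trans (req_sym (he (phi w))) (hl w).
  move=> [_ hl0] v; have [w <-] := hsurj v; exact: req_trans (hl w) (req_sym (hl0 w)).
split.
  move=> f [hf [F [hF hl]]]; exists F; split => //; split => //; exists f; by split.
split.
  move=> mu hmu; split; last exact: deck_lifts hmu.
  split; first exact: deck_is_aut hmu.
  exists (@gen V); split; [exact: gen_aut | exact: deck_lifts hmu].
split.
  move=> mu1 mu2 _ _ h a; have := h a (mu1 a); rewrite /deck_aut !expsum_gen eqxx.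
  move=> H; apply/eqP; rewrite eq_sym; move: H; by case: (mu2 a == mu1 a).
split.
  move=> F1 F2 f1 f2 _ _ _ _ l1 l2 h v b; have [w <-] := hsurj v.
  rewrite (expsum_req b (l1 w)) (expsum_req b (l2 w)) !expsum_mapw.
  apply: eq_bigr => q _; exact: h.
move=> F f [hF _] hf hl hIA.
have [hFh [G [hGh hinv]]] := hF.
have hfib : forall a g, (\sum_(q | phi q == g) expsum (F a) q)%R = Posz (phi a == g).
  move=> a g; rewrite -expsum_mapw -(expsum_req g (hl a)); exact: hIA.
have hcol : forall a, exists a', phi a' = phi a /\ forall q, expsum (F a) q = Posz (a' == q).
  move=> a; have [b hab] := hLi a.
  have hne : phi a != phi b.
    apply/eqP => h; have := hpres _ _ hab; by rewrite h irrG.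
  apply: (column irrG hpres hloc hne (hfib a) (hfib b)).
  move=> p q hpq hn; apply: (comm_minor hpq hn _ (hFh _ _ hab)); by rewrite symL.
pose mu a := odflt a [pick a' | (phi a' == phi a) && [forall q, expsum (F a) q == Posz (a' == q)]].
have hmu : forall a, phi (mu a) = phi a /\ forall q, expsum (F a) q = Posz (mu a == q).
  move=> a; rewrite /mu; case: pickP => [a' /andP [/eqP h1 /forallP h2] | H] /=.
    by split => // q; exact/eqP/(h2 q).
  have [a' [h1 h2]] := hcol a; move: (H a'); rewrite h1 eqxx /= => /negP; case.
  by apply/forallP => q; rewrite h2.
have hG' : forall a q, expsum (G (mu a)) q = Posz (a == q).
  move=> a q; rewrite -expsum_gen -(expsum_req q (hinv a).2) expsum_subst.
  under eq_bigr => r _ do rewrite (hmu a).2.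
  by rewrite sum_delta.
have hinj : injective mu.
  move=> a b h; have := hG' a a; rewrite h hG' eqxx.
  by case: (b =P a).
exists mu; split.
  split; first exact: injF_bij.
  split; last by move=> a; exact: (hmu a).1.
  move=> a b; apply/idP/idP => h.
    have hab : a != b by apply/negP => /eqP e; move: h; rewrite e irrL.
    exact: (edge_lemma symL hGh h (hG' a) (hG' b) hab).
  have hab : mu a != mu b.
    apply/eqP => e; have := hpres _ _ h; rewrite -(hmu a).1 -(hmu b).1 e irrG //.
  exact: (edge_lemma symL hFh h (hmu a).2 (hmu b).2 hab).
move=> a q; rewrite /deck_aut expsum_gen; exact: (hmu a).2.
Qed.
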